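(* Let $F\subset\mathbb{Z}$ be a finite union of intervals of length $n$, and let $a=|\{s\in\mathbb{Z}: s+[0,n)\subset F\}|$. Suppose $u\in\mathcal{A}^F$ satisfies $|W_n(u)|=j<a$. Then every $n$-repeat cover $\mathcal{R}$ for $u$ satisfies $|A(\mathcal{R})|\ge a+n-j-1$.
   Context: $\mathcal{A}$ is a finite alphabet. Intervals are integer intervals, e.g. $[0,n)=\{0,\dots,n-1\}$, and $t+I=\{t+s:s\in I\}$. For $F\subset\mathbb{Z}$, $\mathcal{C}_n(F)=\{t+[0,n): t+[0,n)\subset F\}$. For $u\in\mathcal{A}^F$ and an interval $I\subset F$, $u_I$ denotes the restriction of $u$ to $I$, read as a word; $W_n(u)=\{u_I: I\in\mathcal{C}_n(F)\}$ is the set of distinct words of length $n$ appearing in $u$. A pair $(I_1,I_2)\in\mathcal{C}_n(F)\times\mathcal{C}_n(F)$ is an $n$-repeat for $u$ if $u_{I_1}=u_{I_2}$, $I_1\neq I_2$, and $I_1$ is the lexicographically (leftmost) minimal occurrence of the word $u_{I_1}$ in $u$. For $\mathcal{R}\subset\mathcal{C}_n(F)\times\mathcal{C}_n(F)$, $A(\mathcal{R})=\bigcup_{(I_1,I_2)\in\mathcal{R}}I_2$. $\mathcal{R}$ is an $n$-repeat cover for $u$ if every pair in $\mathcal{R}$ is an $n$-repeat for $u$ and for every $n$-repeat $(I_1,I_2)$ for $u$ we have $I_2\subset A(\mathcal{R})$. *)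

(* Defs.v *)
From HB Require Import structures.
From mathcomp Require Import all_boot all_order all_algebra.
Set Implicit Arguments. Unset Strict Implicit. Unset Printing Implicit Defensive.
Import Order.TTheory GRing.Theory Num.Theory.
Local Open Scope ring_scope.

Definition in_window (n : nat) (t x : int) : Prop := t <= x /\ x < t + n%:Z.

Definition unionF (n : nat) (S : seq int) (x : int) : Prop :=
  exists2 s, s \in S & in_window n s x.

Definition window_in (F : int -> Prop) (n : nat) (t : int) : Prop :=
  forall x, in_window n t x -> F x.

Definition word (A : Type) (u : int -> A) (n : nat) (t : int) : seq A :=
  [seq u (t + i%:Z) | i <- iota 0 n].

Definition Wn (A : Type) (F : int -> Prop) (u : int -> A) (n : nat) (w : seq A) : Prop :=
  exists t, window_in F n t /\ word u n t = w.

(* (t1+[0,n), t2+[0,n)) is an n-repeat for u (intervals identified with their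
   left endpoints; among intervals of equal length the lexicographic order is
   the order of left endpoints). *)
Definition is_repeat (A : Type) (F : int -> Prop) (u : int -> A) (n : nat)
    (p : int * int) : Prop :=
  [/\ window_in F n p.1, window_in F n p.2,
      word u n p.1 = word u n p.2, p.1 <> p.2 &
      forall t, window_in F n t -> word u n t = word u n p.1 -> p.1 <= t].

Definition AR (n : nat) (R : int * int -> Prop) (x : int) : Prop :=
  exists p, R p /\ in_window n p.2 x.

Definition is_repeat_cover (A : Type) (F : int -> Prop) (u : int -> A) (n : nat)
    (R : int * int -> Prop) : Prop :=
  (forall p, R p -> is_repeat F u n p) /\
  (forall p, is_repeat F u n p -> forall x, in_window n p.2 x -> AR n R x).

Definition card_is (T : eqType) (P : T -> Prop) (k : nat) : Prop :=
  exists s : seq T, [/\ uniq s, (forall x, x \in s <-> P x) & size s = k].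

(* Main.v *)
Require Import Defs.
From HB Require Import structures.
From mathcomp Require Import all_boot all_order all_algebra.
From mathcomp Require Import zify.
Import Order.TTheory GRing.Theory Num.Theory.

Lemma ex_min (s : seq int) (P : pred int) x : x \in s -> P x ->
  exists2 y, (y \in s) && P y & forall z, z \in s -> P z -> (y <= z)%R.
Proof.
elim: s x => // h s IH x Hx Px.
case Ps: (has P s).
- case/hasP: Ps => x' x's Px'. have [y /andP[ys Py] Hy] := IH x' x's Px'.
  case: (boolP (P h)) => Ph.
  + case: (lerP h y) => hy.
    * exists h; first by rewrite mem_head Ph.
      move=> z; rewrite inE => /orP[/eqP->|zs] Pz //. exact: le_trans hy (Hy z zs Pz).
    * exists y; first by rewrite inE ys orbT Py.
      move=> z; rewrite inE => /orP[/eqP->|zs] Pz; [exact: ltW | exact: Hy].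
  + exists y; first by rewrite inE ys orbT Py.
    move=> z; rewrite inE => /orP[/eqP->|zs] Pz; [by rewrite Pz in Ph | exact: Hy].
- have xh : x = h.
    move: Hx; rewrite inE => /orP[/eqP//|xs].
    by move/negbT/hasPn: Ps => /(_ x xs); rewrite Px.
  subst; exists h; first by rewrite mem_head Px.
  move=> z; rewrite inE => /orP[/eqP->|zs] Pz //.
  by exfalso; move/negbT/hasPn: Ps => /(_ z zs); rewrite Pz.
Qed.

Lemma ex_max (s : seq int) x : x \in s ->
  exists2 y, (y \in s) & forall z, z \in s -> (z <= y)%R.
Proof.
elim: s x => // h s IH x Hx.
case: s IH Hx => [|h' s] IH Hx.
- exists h; first by rewrite mem_head.
  by move=> z; rewrite inE => /eqP->.
- have [y ys Hy] := IH h' (mem_head _ _).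
  case: (lerP h y) => hy.
  + exists y; first by rewrite inE ys orbT.
    move=> z; rewrite inE => /orP[/eqP->|zs] //. exact: Hy.
  + exists h; first by rewrite mem_head.
    move=> z; rewrite inE => /orP[/eqP->|zs] //. exact: le_trans (Hy z zs) (ltW hy).
Qed.

Theorem mainTheorem4 (A : finType) (n : nat) (S : seq int) (u : int -> A)
    (a j : nat) (R : int * int -> Prop) (m : nat) :
  (0 < n)%N ->
  card_is (window_in (unionF n S) n) a ->
  card_is (Wn (unionF n S) u n) j ->
  (j < a)%N ->
  is_repeat_cover (unionF n S) u n R ->
  card_is (AR n R) m ->
  (a + n - j - 1 <= m)%N.
Proof.
move=> n0 [sW [uW HW sWa]] [sWd [uWd HWd sWdj]] ja [Rrep Rcov] [sR [uR HR sRm]].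
set wd := word u n.
pose isfirst t := all (fun t' => (wd t' != wd t) || (t <= t')%R) sW.
pose D := [seq t <- sW | ~~ isfirst t].
pose Fi := [seq t <- sW | isfirst t].
have szFi : (size Fi <= j)%N.
  rewrite -sWdj -(size_map wd). apply: uniq_leq_size.
  - rewrite map_inj_in_uniq ?filter_uniq //.
    move=> x y; rewrite !mem_filter => /andP[fx xs] /andP[fy ys] e.
    apply/eqP; rewrite eq_le.
    move/allP: fx => /(_ y ys); rewrite e eqxx /= => ->.
    by move/allP: fy => /(_ x xs); rewrite e eqxx /= => ->.
  - move=> w /mapP[t]; rewrite mem_filter => /andP[_ ts] ->.
    apply/HWd. exists t; split => //; exact/HW.
have szD : (a - j <= size D)%N.
  have : (size D + size Fi = a)%N.
    by rewrite -sWa /D /Fi !size_filter addnC count_predC.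
  lia.
have cov : forall t, t \in D -> forall x, in_window n t x -> AR n R x.
  move=> t; rewrite mem_filter => /andP[nf ts].
  have [t0 /andP[t0s /eqP e0] H0] := @ex_min sW (fun z => wd z == wd t) t ts (eqxx _).
  apply: (Rcov (t0, t)). split => /=.
  - exact/HW.
  - exact/HW.
  - exact e0.
  - move=> et; subst t0. apply: (negP nf). apply/allP => z zs.
    case: (wd z =P wd t) => //= ez. apply: H0 => //; exact/eqP.
  - move=> t' wt' et'. apply: H0; [exact/HW | apply/eqP; rewrite /wd et'; exact: e0].
have D0 : (0 < size D)%N by lia.
have [M MD HM] := @ex_max D _ (mem_nth (0:int)%R D0).
pose P := D ++ [seq M + i%:Z | i <- iota 1 n.-1]%R.
have uP : uniq P.
  rewrite cat_uniq filter_uniq //=; apply/andP; split.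
  - apply/hasPn => y /mapP[i]; rewrite mem_iota => /andP[i1 _] ->.
    apply/negP => /HM. lia.
  - rewrite map_inj_uniq ?iota_uniq //. move=> x y /addrI. by case.
have PR : forall x, x \in P -> x \in sR.
  move=> x; rewrite mem_cat => /orP[xD | /mapP[i]].
  - apply/HR; apply: (cov x xD); split; lia.
  - rewrite mem_iota => /andP[i1 i2] ->. apply/HR; apply: (cov M MD); split; lia.
have := uniq_leq_size uP PR. rewrite size_cat size_map size_iota. move: szD sRm n0. rewrite /=. change (@size int D) with (size D). move=> ? ? ? ?. have : (size D + n.-1 <= size sR)%N by []. lia.
Qed.
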